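(* With notation as in the context (type $E_6$ over $\mathbb{Z}/3$), the map $f:\Delta\to\Gamma$ is a bijection.
   Context: Let $V=(\mathbb{Z}/3)^5$ with the standard symmetric form $((x_1,\dots,x_5)|(y_1,\dots,y_5))=\sum_i x_iy_i$, and $\Gamma=\{x\in V\setminus\{0\}:(x|x)=2\}$. Let $\Delta$ be the root system of type $E_6$ with simple roots $\alpha_1,\dots,\alpha_6$, where $\langle\alpha_i,\alpha_i\rangle=2$, $\langle\alpha_i,\alpha_j\rangle=-1$ if $\{i,j\}\in\{\{1,3\},\{3,4\},\{4,5\},\{5,6\},\{2,4\}\}$ and $0$ otherwise; $\Lambda=\bigoplus\mathbb{Z}\alpha_i$. Let $f:\Lambda\to V$ be the group homomorphism with $f(\alpha_1)=(1,2,0,0,0)$, $f(\alpha_2)=(0,0,0,1,2)$, $f(\alpha_3)=(0,1,2,0,0)$, $f(\alpha_4)=(0,0,1,2,0)$, $f(\alpha_5)=(0,0,0,1,1)$, $f(\alpha_6)=(1,1,1,1,1)$. *)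

(* Defs.v *)
From HB Require Import structures.
From mathcomp Require Import all_boot all_order all_algebra.
Set Implicit Arguments. Unset Strict Implicit. Unset Printing Implicit Defensive.
Import GRing.Theory Num.Theory.
Local Open Scope ring_scope.

Definition V := 'rV['F_3]_5.
Definition formV (x y : V) : 'F_3 := \sum_(i < 5) x 0 i * y 0 i.
Definition Gamma : {set V} := [set x : V | (x != 0) && (formV x x == 2%:R)].

(* Lambda = Z^6 in the basis of simple roots alpha_1..alpha_6;
   index i : 'I_6 corresponds to alpha_(i+1). *)
Definition Lam := 'rV[int]_6.

Definition adjE6 (i j : nat) : bool :=
  (i, j) \in [:: (0, 2); (2, 0); (2, 3); (3, 2); (3, 4); (4, 3);
                 (4, 5); (5, 4); (1, 3); (3, 1)]%N.

Definition cartanE6 (i j : 'I_6) : int :=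
  if i == j then 2 else if adjE6 i j then -1 else 0.

Definition formL (x y : Lam) : int :=
  \sum_(i < 6) \sum_(j < 6) x 0 i * cartanE6 i j * y 0 j.

Definition alpha (i : 'I_6) : Lam := delta_mx 0 i.

Definition srefl (i : 'I_6) (x : Lam) : Lam := x - formL x (alpha i) *: alpha i.

Inductive E6root : Lam -> Prop :=
| E6root_simple i : E6root (alpha i)
| E6root_refl i x : E6root x -> E6root (srefl i x).

Definition fvals : seq (seq nat) :=
  [:: [:: 1; 2; 0; 0; 0]%N; [:: 0; 0; 0; 1; 2]%N; [:: 0; 1; 2; 0; 0]%N;
      [:: 0; 0; 1; 2; 0]%N; [:: 0; 0; 0; 1; 1]%N; [:: 1; 1; 1; 1; 1]%N].

Definition falpha (i : 'I_6) : V := \row_(j < 5) ((nth 0%N (nth [::] fvals i) j)%:R).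

Definition fmap (x : Lam) : V := \sum_(i < 6) falpha i *~ x 0 i.

(* Main.v *)
Require Import Defs.
From mathcomp Require Import all_boot all_order all_algebra.
Import GRing.Theory.
Local Open Scope ring_scope.

Definition cartN (a b : nat) : int :=
  if a == b then 2 else if adjE6 a b then -1 else 0.
Definition sreflS (i : nat) (s : seq int) : seq int :=
  let c := foldr (fun k acc => nth 0 s k * cartN k i + acc) 0 (iota 0 6) in
  mkseq (fun j => nth 0 s j - c * ((j == i)%:R)) 6.
Definition eS (i : nat) : seq int := mkseq (fun j => ((j == i)%:R)) 6.
Definition simples := [seq eS i | i <- iota 0 6].
Definition step (R : seq (seq int)) :=
  undup (R ++ [seq sreflS i s | i <- iota 0 6, s <- R]).
Definition RS := iter 12 step simples.
Definition gS (s : seq int) : seq int :=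
  mkseq (fun j => foldr (fun k acc => (nth 0%N (nth [::] fvals k) j)%:Z * nth 0 s k + acc) 0 (iota 0 6)) 5.
Definition red (z : int) : nat := absz (z %% 3)%Z.
Definition h s := map red (gS s).
Definition gammaN (w : seq nat) :=
  (w != [:: 0; 0; 0; 0; 0]%N) && ((foldr (fun x acc => x * x + acc) 0 w) %% 3 == 2)%N.
Fixpoint allW n : seq (seq nat) :=
  if n is n'.+1 then [seq x :: w | x <- iota 0 3, w <- allW n'] else [:: [::]].
Lemma RS_closed : all (fun s => all (fun i => sreflS i s \in RS) (iota 0 6)) RS.
Proof. vm_compute. reflexivity. Qed.
Lemma RS_good : all (fun s => [&& size (h s) == 5%N, all (fun n => n < 3)%N (h s) & gammaN (h s)]) RS.
Proof. vm_compute. reflexivity. Qed.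
Lemma RS_inj : all (fun x => all (fun y => (h x == h y) ==> (x == y)) RS) RS.
Proof. vm_compute. reflexivity. Qed.
Lemma RS_surj : all (fun w => gammaN w ==> has (fun s => h s == w) RS) (allW 5).
Proof. vm_compute. reflexivity. Qed.
Lemma simples_in : all (fun i => eS i \in RS) (iota 0 6).
Proof. vm_compute. reflexivity. Qed.
Lemma sum6 (R : nmodType) (F : 'I_6 -> R) : \sum_(k < 6) F k =
  F (inord 0) + (F (inord 1) + (F (inord 2) + (F (inord 3) + (F (inord 4) + (F (inord 5) + 0))))).
Proof.
rewrite (eq_bigr (fun k : 'I_6 => F (inord k))); last by move=> k _; rewrite inord_val.
rewrite -(big_mkord xpredT (fun k => F (inord k))) /index_iota /=.
by rewrite !big_cons big_nil.
Qed.
Lemma sum5 (R : nmodType) (F : 'I_5 -> R) : \sum_(k < 5) F k =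
  F (inord 0) + (F (inord 1) + (F (inord 2) + (F (inord 3) + (F (inord 4) + 0)))).
Proof.
rewrite (eq_bigr (fun k : 'I_5 => F (inord k))); last by move=> k _; rewrite inord_val.
rewrite -(big_mkord xpredT (fun k => F (inord k))) /index_iota /=.
by rewrite !big_cons big_nil.
Qed.
Lemma a1 (n:nat) : val (n%:R : 'F_3) = (n %% 3)%N.
Proof. exact: (@val_Zp_nat 3). Qed.
Lemma a2 (x : 'F_3) : (val x)%:R = x.
Proof. apply/val_inj. rewrite a1. by rewrite modn_small //; case: x. Qed.
Lemma zmul (A : V) (z : int) j : (A *~ z) 0 j = A 0 j *~ z.
Proof. by case: z => n; rewrite ?NegzE ?mulrNz ?mxE mulmxnE. Qed.
Definition toS (x : Lam) : seq int :=
  [:: x 0 (inord 0); x 0 (inord 1); x 0 (inord 2); x 0 (inord 3); x 0 (inord 4); x 0 (inord 5)].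
Lemma inord_eq n (k : nat) (i : 'I_n.+1) : (k <= n)%N -> (inord k == i) = (k == val i).
Proof. by move=> kn; rewrite -(inj_eq val_inj) /= inordK. Qed.
Lemma cartE k i : (k < 6)%N -> cartanE6 (inord k) i = cartN k i.
Proof. by move=> kn; rewrite /cartanE6 /cartN inord_eq // inordK. Qed.
Lemma formL_alpha x i : formL x (alpha i) = \sum_(k<6) x 0 k * cartanE6 k i.
Proof.
rewrite /formL; apply: eq_bigr => k _.
rewrite (bigD1 i) //= big1 => [|j /negbTE ji]; rewrite /alpha mxE ?eqxx ?ji ?mulr1 ?addr0 ?mulr0 //.
Qed.
Lemma toS_srefl i x : toS (srefl i x) = sreflS i (toS x).
Proof.
rewrite /srefl formL_alpha sum6 /toS /sreflS /= !mxE !cartE // !inord_eq //= !addr0.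
Qed.
Lemma toS_alpha i : toS (alpha i) = eS i.
Proof. by rewrite /toS /eS /alpha /= !mxE !inord_eq. Qed.
Lemma toS_inj a b : toS a = toS b -> a = b.
Proof.
case=> e0 e1 e2 e3 e4 e5; apply/rowP => j; rewrite -(inord_val j).
by case: j => [[|[|[|[|[|[|//]]]]]] Hj].
Qed.
Lemma roots_in a : E6root a -> toS a \in RS.
Proof.
elim=> [i|i x _ IH].
  rewrite toS_alpha; move/allP: simples_in; apply; rewrite mem_iota /=; exact: ltn_ord.
rewrite toS_srefl; move/allP: RS_closed => /(_ _ IH) /allP; apply; rewrite mem_iota /=; exact: ltn_ord.
Qed.
Lemma RS_real n s : s \in iter n step simples -> exists a, E6root a /\ toS a = s.
Proof.
elim: n s => [|n IH] s.
  case/mapP => i; rewrite mem_iota /= => Hi ->.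
  exists (alpha (inord i)); split; first by constructor.
  by rewrite toS_alpha inordK.
rewrite iterS /step mem_undup mem_cat => /orP [/IH //|/allpairsP [[i t] [Hi Ht ->]]].
have [a [Ha <-]] := IH _ Ht.
move: Hi; rewrite mem_iota /= => Hi.
exists (srefl (inord i) a); split; first by constructor.
by rewrite toS_srefl inordK.
Qed.
Lemma redE z : ((red z)%:R : 'F_3) = z%:~R.
Proof.
rewrite {2}(divz_eq z 3) intrD intrM.
have -> : ((3%:Z)%:~R : 'F_3) = 0 by apply/val_inj.
rewrite mulr0 add0r /red.
have H : (0 <= (z %% 3)%Z)%R by rewrite modz_ge0.
by rewrite -[X in _ = X%:~R](gez0_abs H).
Qed.
Lemma tm (n:nat) (z:int) : ((n%:Z * z)%:~R : 'F_3) = n%:R *~ z.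
Proof. rewrite intrM ?mul1r mulrzr. done. Qed.
Definition mkVn (w : seq nat) : V := \row_j (nth 0%N w j)%:R.
Lemma fmap_h a : fmap a = mkVn (h (toS a)).
Proof.
apply/rowP => j; rewrite /fmap summxE sum6 !zmul /falpha !mxE !inordK //.
rewrite (nth_map 0) ?size_mkseq ?ltn_ord // redE nth_mkseq ?ltn_ord //.
cbn [iota foldr]. rewrite /toS; cbn [nth]. by rewrite !intrD !tm.
Qed.
Definition vN (v : V) : seq nat :=
  [:: val (v 0 (inord 0)); val (v 0 (inord 1)); val (v 0 (inord 2)); val (v 0 (inord 3)); val (v 0 (inord 4))].
Lemma vNK : cancel vN mkVn.
Proof.
move=> v; apply/rowP => j; rewrite mxE.
by case: j => [[|[|[|[|[|//]]]]] Hj]; rewrite /= a2; congr (v 0 _); apply/val_inj; rewrite /= inordK.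
Qed.
Lemma mkVnK w : size w = 5%N -> all (fun n => n < 3)%N w -> vN (mkVn w) = w.
Proof.
case: w => [|x0 [|x1 [|x2 [|x3 [|x4 [|//]]]]]] // _ /=.
rewrite !andbT => /and5P [h0 h1 h2 h3 h4].
by rewrite /vN !mxE !inordK //= !a1 !modn_small.
Qed.
Lemma Gamma_mkVn w : size w = 5%N -> all (fun n => n < 3)%N w -> (mkVn w \in Gamma) = gammaN w.
Proof.
move=> Hs Ha; rewrite inE /gammaN.
rewrite -(inj_eq (can_inj vNK)) mkVnK //.
have -> : vN 0 = [:: 0; 0; 0; 0; 0]%N by rewrite /vN !mxE.
congr (_ && _).
move: Hs Ha; case: w => [|x0 [|x1 [|x2 [|x3 [|x4 [|//]]]]]] // _ _.
rewrite /formV sum5 !mxE !inordK //= addr0 addn0 -!natrM -!natrD.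
by rewrite -(inj_eq val_inj) !a1.
Qed.
Lemma allW_in w : all (fun n => n < 3)%N w -> w \in allW (size w).
Proof.
elim: w => [|x w IH] // /andP [hx hw].
change (x :: w \in [seq a :: b | a <- iota 0 3, b <- allW (size w)]).
by apply/allpairsP; exists (x, w); rewrite mem_iota /= IH.
Qed.

Lemma RS_real' s : s \in RS -> exists a, E6root a /\ toS a = s.
Proof. rewrite /RS. exact: RS_real. Qed.
Theorem mainTheorem14 :
  (forall a : Lam, E6root a -> fmap a \in Gamma) /\
  (forall a b : Lam, E6root a -> E6root b -> fmap a = fmap b -> a = b) /\
  (forall v : V, v \in Gamma -> exists a : Lam, E6root a /\ fmap a = v).
Proof.
have good s : s \in RS -> [/\ size (h s) = 5%N, all (fun n => n < 3)%N (h s) & gammaN (h s)].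
  by move/allP: RS_good => /[apply] /and3P [/eqP ? ? ?].
split; [|split].
- move=> a /roots_in /good [h1 h2 h3]; by rewrite fmap_h Gamma_mkVn.
- move=> a b /roots_in Ha /roots_in Hb; rewrite !fmap_h => E.
  have [h1 h2 _] := good _ Ha; have [h1' h2' _] := good _ Hb.
  have E' : h (toS a) = h (toS b) by rewrite -(@mkVnK _ h1 h2) E (@mkVnK _ h1' h2').
  apply: toS_inj; move/allP: RS_inj => /(_ _ Ha) /allP /(_ _ Hb).
  by rewrite E' eqxx => /eqP.
- move=> v Hv.
  have Hall : all (fun n => n < 3)%N (vN v) by rewrite /= !ltn_ord.
  have Hg : gammaN (vN v) by rewrite -Gamma_mkVn // vNK.
  have := @allW_in _ Hall; move/allP: RS_surj => /[apply]; rewrite Hg implyTb.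
  case/hasP => s Hs /eqP Hhs.
  have [a [Ra Ea]] := @RS_real' _ Hs.
  exists a; split; first exact: Ra.
  by rewrite fmap_h Ea Hhs vNK.
Qed.
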